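(* Let $A$ (in $\mathcal H$) and $B$ (in $\mathcal K$) be closed densely defined operators with $A\dashv B$, with a (possibly unbounded) intertwining operator $T$. Then: (i) $\sigma_p(A)\subseteq\sigma_p(B)$; more precisely, if $\xi\in D(A)$ is an eigenvector of $A$ with eigenvalue $\lambda$, then $T\xi$ is an eigenvector of $B$ with eigenvalue $\lambda$, and for every $\lambda\in\sigma_p(A)$ one has $m_A(\lambda)\le m_B(\lambda)$, where $m_C(\lambda)$ denotes the multiplicity of $\lambda$ as an eigenvalue of $C$. (ii) If $TD(A)=D(B)$ and $T^{-1}$ is bounded, then $\sigma_p(A)=\sigma_p(B)$. (iii) If $T^{-1}$ is bounded and $TD(A)$ is a core for $B$, then $\sigma_p(B)\subseteq\sigma(A)$.
   Context: A closed, densely defined operator $T:\mathcal H\to\mathcal K$ is called an intertwining operator for $A$ and $B$ if: (io$_0$) $D(A)\subset D(T)$ and $D(TA)=D(A)$, i.e. $\xi\in D(A)$ implies $A\xi\in D(T)$; (io$_1$) $T$ maps $D(A)$ into $D(B)$; (io$_2$) $BT\xi=TA\xi$ for all $\xi\in D(A)$. We write $A\dashv B$ ($A$ is quasi-similar to $B$) if there exists an intertwining operator $T$ for $A$ and $B$ which is injective and whose inverse $T^{-1}$ (defined on the range of $T$) is densely defined. $\sigma_p$ denotes the point spectrum (set of eigenvalues), $\sigma$ the spectrum. ''$T^{-1}$ bounded'' means bounded on its domain, the range of $T$. *)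

(* Defs.v *)
From Stdlib Require Import Reals.
Open Scope R_scope.
Set Implicit Arguments.

Record C := mkC { Re : R; Im : R }.
Definition C0 : C := mkC 0 0.
Definition C1 : C := mkC 1 0.
Definition Cadd (a b : C) : C := mkC (Re a + Re b) (Im a + Im b).
Definition Cmul (a b : C) : C :=
  mkC (Re a * Re b - Im a * Im b) (Re a * Im b + Im a * Re b).
Definition Cconj (a : C) : C := mkC (Re a) (- Im a).

Record PreHilbert := {
  carrier :> Type;
  hzero : carrier;
  hadd : carrier -> carrier -> carrier;
  hopp : carrier -> carrier;
  hscal : C -> carrier -> carrier;
  inner : carrier -> carrier -> C;
  hadd_assoc : forall x y z, hadd x (hadd y z) = hadd (hadd x y) z;
  hadd_comm : forall x y, hadd x y = hadd y x;
  hadd_0 : forall x, hadd x hzero = x;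
  hadd_opp : forall x, hadd x (hopp x) = hzero;
  hscal_1 : forall x, hscal C1 x = x;
  hscal_assoc : forall a b x, hscal a (hscal b x) = hscal (Cmul a b) x;
  hscal_distr_v : forall a x y, hscal a (hadd x y) = hadd (hscal a x) (hscal a y);
  hscal_distr_s : forall a b x, hscal (Cadd a b) x = hadd (hscal a x) (hscal b x);
  inner_conj : forall x y, inner y x = Cconj (inner x y);
  inner_add_l : forall x y z, inner (hadd x y) z = Cadd (inner x z) (inner y z);
  inner_scal_l : forall a x y, inner (hscal a x) y = Cmul a (inner x y);
  inner_pos : forall x, 0 <= Re (inner x x);
  inner_def : forall x, inner x x = C0 -> x = hzero
}.

Definition hnorm {H : PreHilbert} (x : H) : R := sqrt (Re (inner H x x)).
Definition hsub {H : PreHilbert} (x y : H) : H := hadd H x (hopp H y).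
Definition hdist {H : PreHilbert} (x y : H) : R := hnorm (hsub x y).

Definition converges {H : PreHilbert} (u : nat -> H) (l : H) : Prop :=
  forall eps, eps > 0 -> exists N, forall n, (n >= N)%nat -> hdist (u n) l < eps.
Definition cauchy {H : PreHilbert} (u : nat -> H) : Prop :=
  forall eps, eps > 0 -> exists N, forall n m, (n >= N)%nat -> (m >= N)%nat ->
    hdist (u n) (u m) < eps.

Record Hilbert := {
  hpre :> PreHilbert;
  hcomplete : forall u : nat -> hpre, cauchy u -> exists l, converges u l
}.

Definition dense {H : PreHilbert} (P : H -> Prop) : Prop :=
  forall x eps, eps > 0 -> exists y, P y /\ hdist x y < eps.

(* An operator is a linear map defined on a linear subspace [dom] of H;
   [app] is only meaningful on [dom]. *)
Record Op (H K : PreHilbert) := {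
  dom : H -> Prop;
  app : H -> K;
  dom_zero : dom (hzero H);
  dom_add : forall x y, dom x -> dom y -> dom (hadd H x y);
  dom_scal : forall a x, dom x -> dom (hscal H a x);
  app_add : forall x y, dom x -> dom y -> app (hadd H x y) = hadd K (app x) (app y);
  app_scal : forall a x, dom x -> app (hscal H a x) = hscal K a (app x)
}.

Definition closed_op {H K : PreHilbert} (T : Op H K) : Prop :=
  forall (u : nat -> H) (l : H) (y : K),
    (forall n, dom T (u n)) -> converges u l -> converges (fun n => app T (u n)) y ->
    dom T l /\ app T l = y.

Definition densely_defined {H K : PreHilbert} (T : Op H K) : Prop := dense (dom T).

(* range of T = domain of T^{-1} *)
Definition range {H K : PreHilbert} (T : Op H K) (y : K) : Prop :=
  exists x, dom T x /\ app T x = y.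

Definition image_dom {H K : PreHilbert} (T : Op H K) (A : Op H H) (y : K) : Prop :=
  exists x, dom A x /\ app T x = y.

Definition injective_op {H K : PreHilbert} (T : Op H K) : Prop :=
  forall x y, dom T x -> dom T y -> app T x = app T y -> x = y.

(* T^{-1} bounded on its domain ran(T) *)
Definition inv_bounded {H K : PreHilbert} (T : Op H K) : Prop :=
  exists c, forall x, dom T x -> hnorm x <= c * hnorm (app T x).

Definition intertwining {H K : PreHilbert} (A : Op H H) (B : Op K K) (T : Op H K) : Prop :=
  closed_op T /\ densely_defined T /\
  (forall x, dom A x -> dom T x /\ dom T (app A x)) /\
  (forall x, dom A x -> dom B (app T x)) /\
  (forall x, dom A x -> app B (app T x) = app T (app A x)).

(* A ⊣ B, witnessed by the intertwining operator T:
   T injective and T^{-1} densely defined (i.e. ran T dense). *)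
Definition quasi_similar_via {H K : PreHilbert} (A : Op H H) (B : Op K K) (T : Op H K) : Prop :=
  intertwining A B T /\ injective_op T /\ dense (range T).

Definition quasi_similar {H K : PreHilbert} (A : Op H H) (B : Op K K) : Prop :=
  exists T, quasi_similar_via A B T.

Definition eigenvector {H : PreHilbert} (A : Op H H) (lam : C) (xi : H) : Prop :=
  dom A xi /\ xi <> hzero H /\ app A xi = hscal H lam xi.

Definition point_spectrum {H : PreHilbert} (A : Op H H) (lam : C) : Prop :=
  exists xi, eigenvector A lam xi.

Definition resolvent_set {H : PreHilbert} (A : Op H H) (lam : C) : Prop :=
  exists Rl : H -> H,
    (forall y, dom A (Rl y) /\ hsub (app A (Rl y)) (hscal H lam (Rl y)) = y) /\
    (forall x, dom A x -> Rl (hsub (app A x) (hscal H lam x)) = x) /\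
    (exists c, forall y, hnorm (Rl y) <= c * hnorm y).

Definition spectrum {H : PreHilbert} (A : Op H H) (lam : C) : Prop :=
  ~ resolvent_set A lam.

Fixpoint hsum {H : PreHilbert} (n : nat) (f : nat -> H) : H :=
  match n with
  | O => hzero H
  | S k => hadd H (hsum k f) (f k)
  end.

Definition lin_indep {H : PreHilbert} (n : nat) (v : nat -> H) : Prop :=
  forall a : nat -> C, hsum n (fun i => hscal H (a i) (v i)) = hzero H ->
    forall i, (i < n)%nat -> a i = C0.

Definition eig_dim_ge {H : PreHilbert} (A : Op H H) (lam : C) (n : nat) : Prop :=
  exists v : nat -> H,
    (forall i, (i < n)%nat -> dom A (v i) /\ app A (v i) = hscal H lam (v i)) /\
    lin_indep n v.

(* m_A(lam) <= m_B(lam), multiplicities taken in N ∪ {∞}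
   (m_C(lam) = dim ker(C - lam) = sup { n | eig_dim_ge C lam n }) *)
Definition mult_le {H K : PreHilbert} (A : Op H H) (B : Op K K) (lam : C) : Prop :=
  forall n, eig_dim_ge A lam n -> eig_dim_ge B lam n.

Definition core {K : PreHilbert} (B : Op K K) (D : K -> Prop) : Prop :=
  (forall y, D y -> dom B y) /\
  (forall y, dom B y -> forall eps, eps > 0 ->
     exists z, D z /\ hdist y z < eps /\ hdist (app B y) (app B z) < eps).

(* Main.v *)
Require Import Defs.
From Stdlib Require Import Reals Lra Lia Psatz ClassicalEpsilon.
Open Scope R_scope.

Section G.
Variable H : PreHilbert.
Notation "0h" := (hzero H).
Notation add := (hadd H).
Notation opp := (hopp H).
Notation scal := (hscal H).

Lemma add0l x : add 0h x = x.
Proof. rewrite hadd_comm; apply hadd_0. Qed.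

Lemma opp_l x : add (opp x) x = 0h.
Proof. rewrite hadd_comm; apply hadd_opp. Qed.

Lemma cancel_r a b : add a b = a -> b = 0h.
Proof.
  intro E. transitivity (add (add (opp a) a) b).
  rewrite opp_l; symmetry; apply add0l.
  rewrite <- hadd_assoc, E. apply opp_l.
Qed.

Lemma opp_unique u v : add u v = 0h -> v = opp u.
Proof.
  intro E. transitivity (add (add (opp u) u) v).
  rewrite opp_l; symmetry; apply add0l.
  rewrite <- hadd_assoc, E. apply hadd_0.
Qed.

Lemma scal0 x : scal Defs.C0 x = 0h.
Proof.
  apply (cancel_r (scal Defs.C0 x)).
  rewrite <- hscal_distr_s. f_equal. unfold Cadd, Defs.C0; simpl. f_equal; ring.
Qed.

Definition m1 := mkC (-1) 0.

Lemma opp_scal x : opp x = scal m1 x.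
Proof.
  symmetry. apply opp_unique.
  rewrite <- (hscal_1 H x) at 1. rewrite <- hscal_distr_s.
  replace (Cadd Defs.C1 m1) with Defs.C0. apply scal0.
  unfold Cadd, Defs.C0, Defs.C1, m1; simpl. f_equal; ring.
Qed.

Lemma opp0 : opp 0h = 0h.
Proof. symmetry; apply opp_unique. apply hadd_0. Qed.

Lemma sub0 x : hsub x 0h = x.
Proof. unfold hsub. rewrite opp0. apply hadd_0. Qed.

Lemma telesc a b c : add (hsub a b) (add b c) = add a c.
Proof.
  unfold hsub. rewrite hadd_assoc. f_equal.
  rewrite <- hadd_assoc, opp_l. apply hadd_0.
Qed.

Lemma sub_opp a b : opp (hsub a b) = hsub b a.
Proof.
  symmetry. apply opp_unique. unfold hsub at 2. rewrite telesc. apply hadd_opp.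
Qed.

Lemma scal_opp l x : scal l (opp x) = opp (scal l x).
Proof.
  rewrite !opp_scal, !hscal_assoc. f_equal. destruct l; unfold Cmul, m1; simpl.
  f_equal; ring.
Qed.

Definition P x y := Re (inner H x y).
Definition N x := P x x.

Lemma P_sym x y : P x y = P y x.
Proof. unfold P. rewrite inner_conj. reflexivity. Qed.

Lemma P_addl x y z : P (add x y) z = P x z + P y z.
Proof. unfold P. rewrite inner_add_l. reflexivity. Qed.

Lemma P_addr x y z : P z (add x y) = P z x + P z y.
Proof. rewrite !(P_sym z). apply P_addl. Qed.

Lemma P_0l z : P 0h z = 0.
Proof.
  assert (E := P_addl 0h 0h z). rewrite hadd_0 in E. lra.
Qed.

Lemma P_oppl x z : P (opp x) z = - P x z.
Proof.
  assert (E := P_addl x (opp x) z). rewrite hadd_opp, P_0l in E. lra.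
Qed.

Lemma P_oppr x z : P z (opp x) = - P z x.
Proof. rewrite !(P_sym z). apply P_oppl. Qed.

Lemma N_nonneg x : 0 <= N x.
Proof. apply inner_pos. Qed.

Lemma N_opp x : N (opp x) = N x.
Proof. unfold N. rewrite P_oppl, P_oppr. ring. Qed.

Lemma N_sym a b : N (hsub a b) = N (hsub b a).
Proof. rewrite <- sub_opp, N_opp. reflexivity. Qed.

Lemma N_add_le a b : N (add a b) <= 2 * N a + 2 * N b.
Proof.
  assert (H1 := N_nonneg (add a (opp b))).
  unfold N in *. rewrite !P_addl, !P_addr, !P_oppl, !P_oppr in *.
  rewrite (P_sym b a) in *. lra.
Qed.

Lemma Im_self x : Im (inner H x x) = 0.
Proof.
  assert (E := f_equal Im (inner_conj H x x)). simpl in E. lra.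
Qed.

Lemma N_scal l x : N (scal l x) = (Re l * Re l + Im l * Im l) * N x.
Proof.
  unfold N, P. rewrite inner_scal_l, inner_conj, inner_scal_l.
  assert (I := Im_self x). destruct (inner H x x) as [r i]. simpl in *.
  subst i. destruct l as [p q]. simpl. ring.
Qed.

Lemma hnorm_lt x e : hnorm x < e -> N x < e * e.
Proof.
  unfold hnorm. intro h. assert (h0 := sqrt_pos (N x)).
  assert (h1 := sqrt_sqrt (N x) (N_nonneg x)). unfold N, P in *. nra.
Qed.

Lemma hnorm_lt2 x e : 0 < e -> N x < e * e -> hnorm x < e.
Proof.
  intros he h. unfold hnorm. assert (h0 := sqrt_pos (N x)).
  assert (h1 := sqrt_sqrt (N x) (N_nonneg x)). unfold N, P in *. nra.
Qed.



End G.

Lemma hnorm_le (H1 H2 : PreHilbert) (x : H1) (y : H2) c : hnorm x <= c * hnorm y -> N H1 x <= c * c * N H2 y.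
Proof.
  unfold hnorm. intro h. assert (h0 := sqrt_pos (N H1 x)). assert (h0' := sqrt_pos (N H2 y)).
  assert (h1 := sqrt_sqrt (N H1 x) (N_nonneg H1 x)).
  assert (h2 := sqrt_sqrt (N H2 y) (N_nonneg H2 y)). unfold N, P in *. nra.
Qed.

Section Ops.
Variables H K : PreHilbert.
Variable T : Op H K.

Lemma app_zero : app T (hzero H) = hzero K.
Proof.
  apply (cancel_r K (app T (hzero H))).
  rewrite <- app_add by apply dom_zero. rewrite hadd_0. reflexivity.
Qed.

Lemma dom_opp x : dom T x -> dom T (hopp H x).
Proof. intro; rewrite opp_scal; apply dom_scal; auto. Qed.

Lemma app_opp x : dom T x -> app T (hopp H x) = hopp K (app T x).
Proof. intro; rewrite !opp_scal; apply app_scal; auto. Qed.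

Lemma dom_sub x y : dom T x -> dom T y -> dom T (hsub x y).
Proof. intros; apply dom_add; auto; apply dom_opp; auto. Qed.

Lemma app_sub x y : dom T x -> dom T y -> app T (hsub x y) = hsub (app T x) (app T y).
Proof. intros; unfold hsub. rewrite app_add, app_opp; auto. apply dom_opp; auto. Qed.

Lemma hsum_app n (a : nat -> Defs.C) (v : nat -> H) :
  (forall i, (i < n)%nat -> dom T (v i)) ->
  dom T (hsum n (fun i => hscal H (a i) (v i))) /\
  app T (hsum n (fun i => hscal H (a i) (v i))) = hsum n (fun i => hscal K (a i) (app T (v i))).
Proof.
  induction n; intros hv; simpl.
  - split; [apply dom_zero | apply app_zero].
  - destruct IHn as [d e]. { intros; apply hv; lia. }
    assert (dv : dom T (hscal H (a n) (v n))) by (apply dom_scal; apply hv; lia).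
    split. apply dom_add; auto.
    rewrite app_add, e, app_scal; auto.
Qed.
End Ops.

Lemma seq_small K d : d > 0 -> exists N0, forall n, (n >= N0)%nat -> K * / (INR n + 1) < d.
Proof.
  intro hd. destruct (INR_archimed d K hd) as [N0 hN]. exists N0. intros n hn.
  apply le_INR in hn. assert (0 < INR n + 1) by (pose proof (pos_INR n); lra).
  apply (Rmult_lt_reg_r (INR n + 1)); auto.
  rewrite Rmult_assoc, Rinv_l by lra. nra.
Qed.

Theorem proposition2p9 (H K : Hilbert) (A : Op H H) (B : Op K K) (T : Op H K) :
  closed_op A -> densely_defined A ->
  closed_op B -> densely_defined B ->
  quasi_similar_via A B T ->
  (* (i) *)
  ((forall lam, point_spectrum A lam -> point_spectrum B lam) /\
   (forall lam xi, eigenvector A lam xi -> eigenvector B lam (app T xi)) /\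
   (forall lam, point_spectrum A lam -> mult_le A B lam)) /\
  (* (ii) *)
  ((forall y, dom B y <-> image_dom T A y) -> inv_bounded T ->
     forall lam, point_spectrum A lam <-> point_spectrum B lam) /\
  (* (iii) *)
  (inv_bounded T -> core B (image_dom T A) ->
     forall lam, point_spectrum B lam -> spectrum A lam).
Proof.
  intros cA dA cB dB [[cT [dT [io0 [io1 io2]]]] [injT rT]].
  assert (T0 : forall x, dom T x -> app T x = hzero K -> x = hzero H).
  { intros x dx e. apply injT; auto. apply dom_zero. rewrite app_zero. auto. }
  assert (EV : forall lam xi, eigenvector A lam xi -> eigenvector B lam (app T xi)).
  { intros lam xi [d [nz e]]. destruct (io0 xi d) as [d1 d2]. split; [|split].
    - apply io1; auto.
    - intro z. apply nz, T0; auto.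
    - rewrite io2, e, app_scal; auto. }
  assert (PS : forall lam, point_spectrum A lam -> point_spectrum B lam).
  { intros lam [xi h]. exists (app T xi). apply EV; auto. }
  split; [split; [|split]|split]; auto.
  - intros lam _ n [v [hv li]]. exists (fun i => app T (v i)). split.
    + intros i hi. destruct (hv i hi) as [d e]. destruct (io0 _ d) as [d1 d2].
      split. apply io1; auto. rewrite io2, e, app_scal; auto.
    + intros a ha. apply li.
      assert (hd : forall i, (i < n)%nat -> dom T (v i)).
      { intros i hi. apply (io0 _ (proj1 (hv i hi))). }
      destruct (hsum_app _ _ T n a v hd) as [d e]. apply T0; auto. rewrite e; auto.
  - intros hBD _ lam. split; auto.
    intros [y [dy [nz e]]]. destruct (proj1 (hBD y) dy) as [x [dx ex]]. subst y.
    destruct (io0 x dx) as [d1 d2].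
    exists x. split; [|split]; auto.
    + intro z; apply nz; subst x; apply app_zero.
    + apply injT; auto. apply dom_scal; auto.
      rewrite <- io2, e, app_scal; auto.
  - intros [c1 hc1] [cD cApp] lam [y [dy [nz e]]] [Rl [hR1 [hR2 [c0 hc0]]]].
    set (K0 := c0 * c0 * (c1 * c1) * (2 + 2 * (Re lam * Re lam + Im lam * Im lam))).
    assert (ex : forall n, exists x, dom A x /\ hdist y (app T x) < / (INR n + 1) /\
               hdist (app B y) (app B (app T x)) < / (INR n + 1)).
    { intro n. assert (pn : / (INR n + 1) > 0).
      { apply Rinv_0_lt_compat. pose proof (pos_INR n); lra. }
      destruct (cApp y dy _ pn) as [z [[x [dx ez]] [h1 h2]]]. subst z. exists x; auto. }
    set (xs := fun n => proj1_sig (constructive_indefinite_description _ (ex n))).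
    assert (hx : forall n, dom A (xs n) /\ hdist y (app T (xs n)) < / (INR n + 1) /\
               hdist (app B y) (app B (app T (xs n))) < / (INR n + 1)).
    { intro n. unfold xs. destruct (constructive_indefinite_description _ (ex n)); auto. }
    assert (bound : forall n, N H (xs n) <= K0 * / (INR n + 1)).
    { intro n. destruct (hx n) as [dx [h1 h2]]. set (x := xs n) in *.
      set (en := / (INR n + 1)).
      assert (en0 : 0 < en). { apply Rinv_0_lt_compat. pose proof (pos_INR n); lra. }
      assert (en1 : en <= 1).
      { unfold en. rewrite <- Rinv_1. apply Rinv_le_contravar. lra. pose proof (pos_INR n); lra. }
      destruct (io0 x dx) as [d1 d2].
      set (w := hsub (app A x) (hscal H lam x)).
      assert (dw : dom T w) by (apply dom_sub; auto; apply dom_scal; auto).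
      assert (Rw : Rl w = x) by (apply hR2; auto).
      assert (b1 : N H x <= c0 * c0 * N H w).
      { apply hnorm_le. rewrite <- Rw at 1. apply hc0. }
      assert (b2 : N H w <= c1 * c1 * N K (app T w)).
      { apply hnorm_le. apply hc1; auto. }
      assert (Tw : app T w = hadd K (hsub (app B (app T x)) (app B y))
                                     (hscal K lam (hsub y (app T x)))).
      { unfold w. rewrite app_sub, app_scal, <- io2 by (auto; apply dom_scal; auto).
        rewrite e. unfold hsub at 3. rewrite hscal_distr_v, scal_opp.
        rewrite telesc. reflexivity. }
      assert (b3 := N_add_le K (hsub (app B (app T x)) (app B y))
                                     (hscal K lam (hsub y (app T x)))).
      rewrite <- Tw, N_scal, N_sym in b3.
      apply hnorm_lt in h1. apply hnorm_lt in h2. unfold hdist in *.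
      assert (p1 := N_nonneg K (hsub (app B y) (app B (app T x)))).
      assert (p2 := N_nonneg K (hsub y (app T x))).
      assert (p3 := N_nonneg K (app T w)).
      assert (p4 := N_nonneg H w).
      assert (l0 : 0 <= Re lam * Re lam + Im lam * Im lam) by nra.
      assert (c00 : 0 <= c0 * c0) by nra. assert (c11 : 0 <= c1 * c1) by nra.
      assert (b4 : N K (app T w) <= (2 + 2 * (Re lam * Re lam + Im lam * Im lam)) * en).
      { assert (q1 : en * en <= en) by nra. fold en in h1, h2.
        set (L := Re lam * Re lam + Im lam * Im lam) in *.
        assert (q2 : L * N K (hsub y (app T x)) <= L * (en * en)).
        { apply Rmult_le_compat_l; lra. }
        assert (q3 : (2 + 2 * L) * (en * en) <= (2 + 2 * L) * en).
        { apply Rmult_le_compat_l; lra. }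
        lra. }
      unfold K0. 
      assert (N H w <= c1 * c1 * ((2 + 2 * (Re lam * Re lam + Im lam * Im lam)) * en)).
      { eapply Rle_trans. apply b2. apply Rmult_le_compat_l; auto. }
      eapply Rle_trans. apply b1.
      replace (c0 * c0 * (c1 * c1) * (2 + 2 * (Re lam * Re lam + Im lam * Im lam)) * en)
        with (c0 * c0 * (c1 * c1 * ((2 + 2 * (Re lam * Re lam + Im lam * Im lam)) * en))) by ring.
      apply Rmult_le_compat_l; auto. }
    destruct (cT xs (hzero H) y).
    + intro n. apply (io0 _ (proj1 (hx n))).
    + intros eps heps. destruct (seq_small K0 (eps * eps)) as [N0 hN0]. nra.
      exists N0. intros n hn. unfold hdist. rewrite sub0. apply hnorm_lt2; auto.
      eapply Rle_lt_trans. apply bound. auto.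
    + intros eps heps. destruct (seq_small 1 eps heps) as [N0 hN0].
      exists N0. intros n hn. destruct (hx n) as [_ [h1 _]].
      unfold hdist in *. apply hnorm_lt2; auto. rewrite N_sym. apply hnorm_lt in h1.
      assert (h3 := hN0 n hn). rewrite Rmult_1_l in h3.
      assert (0 < / (INR n + 1)). { apply Rinv_0_lt_compat. pose proof (pos_INR n); lra. }
      assert (/ (INR n + 1) <= 1).
      { rewrite <- Rinv_1. apply Rinv_le_contravar. lra. pose proof (pos_INR n); lra. }
      nra.
    + apply nz. rewrite <- H1. apply app_zero.
Qed.
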